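(* Let $\mathcal{D}$ be a $p$-unipotent differential operator and let $k$ be a finite field of characteristic $p$ such that $\mathcal{D}_p$ has coefficients in $k(z)$. If $\ker(k(z),\mathcal{D}_p)\neq0$, then $\dim_{k(z^p)}\ker(k(z),\mathcal{D}_p)=1$.
   Context: $\ker(k(z),\mathcal{D}_p)$ is the set of solutions of $\mathcal{D}_p$ in $k(z)$; it is a $k(z^p)$-vector space. $\delta=z\,d/dz$. $\mathbb{C}_p$ is the completion of an algebraic closure of $\mathbb{Q}_p$; $E_p$ is the completion of $\mathbb{C}_p(z)$ for the Gauss norm; $\vartheta_{E_p}$ its ring of elements of norm $\le1$ with maximal ideal $\mathfrak{m}_p$; $\vartheta_{E_p}/\mathfrak{m}_p$ is identified with a subfield of $\overline{\mathbb{F}_p}(z)$, and for an operator $\mathcal{D}$ with coefficients in $\vartheta_{E_p}$, $\mathcal{D}_p$ is the reduction of its coefficients modulo $\mathfrak{m}_p$. MOM at zero (over any field $K$): for monic $L=\frac{d^n}{dz^n}+a_1\frac{d^{n-1}}{dz^{n-1}}+\dots+a_n\in K(z)[d/dz]$, $\alpha\in\overline K$ is singular if a pole of some $a_i$, regular singular if moreover each $(z-\alpha)^ia_i$ has no pole at $\alpha$; $\infty$ is regular singular if $0$ is regular singular after $z\mapsto1/z$; $L$ is Fuchsian if $\infty$ and all finite singular points are regular singular; writing $z^nL=\delta^n+b_1\delta^{n-1}+\dots+b_n$, the exponents at $0$ are the roots of $x^n+b_1(0)x^{n-1}+\dots+b_n(0)$; $L$ is MOM at zero if Fuchsian, $0$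 regular singular and all exponents at $0$ zero. An operator with coefficients in $E_p$ is $p$-unipotent if its coefficients lie in $\vartheta_{E_p}$ and its reduction modulo $\mathfrak{m}_p$ is nonzero and MOM at zero. *)

(* Defs.v *)
From HB Require Import structures.
From mathcomp Require Import all_boot all_order all_algebra fraction.
Set Implicit Arguments. Unset Strict Implicit. Unset Printing Implicit Defensive.
Import GRing.Theory.
Local Open Scope ring_scope.
Notation "x %:F" := (@FracField.tofrac _ x) : ring_scope.
From mathcomp Require Import generic_quotient.

Section RatFun.
Variable k : fieldType.
Local Notation K := {fraction {poly k}}.

Definition zK : K := ('X : {poly k})%:F.

(* d/dz on k(z), computed on an (arbitrary) representative p/q:
   (p/q)' = (p' q - p q') / q^2  (independent of the representative) *)
Definition dz (f : K) : K :=
  let r := repr f in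
  let p := (frac r).1 in let q := (frac r).2 in
  ((p^`() * q - p * q^`())%:F) / ((q ^+ 2)%:F).

(* An operator L = \sum_i L_i (d/dz)^i, coefficients in k(z), is
   represented by the polynomial \sum_i L_i X^i in {poly k(z)}. *)
Definition applyOp (L : {poly K}) (f : K) : K :=
  \sum_(i < size L) L`_i * iter i dz f.

Definition inKzp (p : nat) (g : K) : Prop :=
  exists u v : {poly k}, g = (u \Po 'X^p)%:F / (v \Po 'X^p)%:F.

(* order n of a nonzero operator and its monic normalisation
   L / lead = d^n + a_1 d^(n-1) + ... + a_n *)
Definition ordOp (L : {poly K}) : nat := (size L).-1.
Definition monCoef (L : {poly K}) (i : nat) : K :=
  L`_(ordOp L - i) / lead_coef L.

(* For phi : k -> C (C an algebraically closed extension of k),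
   alpha in C and f in k(z): (z - alpha)^i f has no pole at alpha,
   i.e. f admits a representation u/v with (z-alpha)^(i+1) not dividing v. *)
Definition ordBound (C : closedFieldType) (phi : {rmorphism k -> C})
    (alpha : C) (i : nat) (f : K) : Prop :=
  exists u v : {poly k}, v != 0 /\ f = u%:F / v%:F /\
    ~~ (('X - alpha%:P) ^+ i.+1 %| map_poly phi v).

(* alpha is a singular point of L: pole of some a_i *)
Definition singularPt C phi alpha (L : {poly K}) : Prop :=
  exists i, (1 <= i <= ordOp L)%N /\ ~ @ordBound C phi alpha 0 (monCoef L i).

Definition regSingPt C phi alpha (L : {poly K}) : Prop :=
  singularPt phi alpha L /\
  forall i, (1 <= i <= ordOp L)%N -> @ordBound C phi alpha i (monCoef L i).

Definition noPoleInf (f : K) : Prop :=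
  exists u v : {poly k}, v != 0 /\ f = u%:F / v%:F /\ (size u <= size v)%N.

(* infinity is a regular singular point (equivalently, 0 is regular
   singular after z -> 1/z): each z^i a_i has no pole at infinity *)
Definition regSingInf (L : {poly K}) : Prop :=
  forall i, (1 <= i <= ordOp L)%N -> noPoleInf (zK ^+ i * monCoef L i).

Definition fuchsian (L : {poly K}) : Prop :=
  (forall (C : closedFieldType) (phi : {rmorphism k -> C}) (alpha : C),
      singularPt phi alpha L -> regSingPt phi alpha L) /\
  regSingInf L.

Definition regSing0 (L : {poly K}) : Prop :=
  forall (C : closedFieldType) (phi : {rmorphism k -> C}) (i : nat),
    (1 <= i <= ordOp L)%N -> @ordBound C phi 0 i (monCoef L i).

Definition fallF (m : nat) : {poly K} := \prod_(j < m) ('X - (j%:R)%:P).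

(* z^n L = \sum_i (z^i a_i) z^(n-i) d^(n-i) = \sum_i (z^i a_i) fallF(n-i)(delta)
   = delta^n + b_1 delta^(n-1) + ... + b_n ; deltaForm L is this
   polynomial in delta and b_j its coefficient of delta^(n-j). *)
Definition deltaForm (L : {poly K}) : {poly K} :=
  \sum_(i < (ordOp L).+1) (zK ^+ i * monCoef L i) *: fallF (ordOp L - i).
Definition bCoef (L : {poly K}) (j : nat) : K := (deltaForm L)`_(ordOp L - j).

Definition valueAt0 (f : K) (c : k) : Prop :=
  exists u v : {poly k}, v.[0] != 0 /\ f = u%:F / v%:F /\ c = u.[0] / v.[0].

(* exponents at 0: roots (in an algebraic closure) of
   x^n + b_1(0) x^(n-1) + ... + b_n(0); all of them are zero *)
Definition exponents0_zero (L : {poly K}) : Prop :=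
  forall (c : nat -> k), (forall j, (j <= ordOp L)%N -> valueAt0 (bCoef L j) (c j)) ->
  forall (C : closedFieldType) (phi : {rmorphism k -> C}) (x : C),
    root (map_poly phi (\sum_(j < (ordOp L).+1) c j *: 'X^(ordOp L - j))) x ->
    x = 0.

Definition MOM0 (L : {poly K}) : Prop :=
  fuchsian L /\ regSing0 L /\ exponents0_zero L.

End RatFun.

(* Main.v *)
Require Import Defs.
From HB Require Import structures.
From mathcomp Require Import all_boot all_order all_algebra fraction.
From mathcomp Require Import generic_quotient ring closed_field.
Import GRing.Theory.
Set Implicit Arguments. Unset Strict Implicit. Unset Printing Implicit Defensive.
Local Open Scope ring_scope.

Lemma fM (F: fieldType) (A B C D A' B' C' D' : F): B != 0 -> D != 0 -> ((A'*C + A*C')*(B*D) - A*C*(B'*D + B*D'))/((B*D)^+2) = (A'*B - A*B')/(B^+2) * (C/D) + A/B * ((C'*D - C*D')/(D^+2)).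
Proof. by move=> hB hD; field; rewrite hB hD. Qed.
Lemma fB (F: fieldType) (A B C D A' B' C' D' : F): B != 0 -> D != 0 ->
 ((A' * D + A * D' - (C' * B + C * B')) * (B * D) - (A * D - C * B) * (B' * D + B * D')) / (B*D)^+2
 = (A'*B - A*B')/(B^+2) - (C'*D - C*D')/(D^+2).
Proof. by move=> hB hD; field; rewrite hB hD. Qed.
Lemma fB0 (F: fieldType) (A B C D : F): B != 0 -> D != 0 -> A/B - C/D = (A*D - C*B)/(B*D).
Proof. by move=> hB hD; field; rewrite hB hD. Qed.

Section Frac.
Variable k : fieldType.
Local Notation K := {fraction {poly k}}.

Lemma fracE (f : K) : f = (\n_(repr f))%:F / (\d_(repr f))%:F.
Proof.
have hd := denom_ratioP (repr f).
apply: (canRL (mulfK _)); first by rewrite tofrac_eq0.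
rewrite -{1}[f]reprK. unlock FracField.tofrac.
rewrite !piE.
apply/eqmodP; rewrite /= FracField.equivfE.
rewrite /FracField.mulf !numden_Ratio ?oner_eq0 ?mulf_neq0 // ?oner_eq0 // mulr1 mulr1 mulrC //.
Qed.

Lemma fracP (f : K) : exists u v : {poly k}, v != 0 /\ f = u%:F / v%:F.
Proof. by exists (\n_(repr f)), (\d_(repr f)); split; [exact: denom_ratioP|exact: fracE]. Qed.

Lemma tofrac_neq0 {v : {poly k}} : v != 0 -> v%:F != 0 :> K.
Proof. by rewrite tofrac_eq0. Qed.

Lemma dzE (u v : {poly k}) : v != 0 ->
  dz (u%:F / v%:F) = (u^`() * v - u * v^`())%:F / (v ^+ 2)%:F.
Proof.
move=> hv; rewrite /dz.
set f := u%:F / v%:F.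
have hb := denom_ratioP (repr f).
have hf := fracE f.
move: hb hf; set a := \n_(repr f); set b := \d_(repr f) => hb hf.
have H1 : a * v - u * b = 0.
  apply/eqP; rewrite -tofrac_eq0 tofracB !tofracM.
  have: a%:F / b%:F = u%:F / v%:F :> K by rewrite -hf.
  move/eqP; rewrite eqr_div ?tofrac_neq0 // => /eqP ->; rewrite mulrC subrr //.
have H2 : a^`() * v + a * v^`() - (u^`() * b + u * b^`()) = 0.
  by rewrite -!derivM -derivB H1 deriv0.
apply/eqP; rewrite eqr_div ?tofrac_neq0 ?expf_neq0 //.
rewrite -!tofracM tofrac_eq; apply/eqP.
apply/eqP; rewrite -subr_eq0; apply/eqP.
have -> : (a^`() * b - a * b^`()) * v ^+ 2 - (u^`() * v - u * v^`()) * b ^+ 2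
   = b * v * (a^`() * v + a * v^`() - (u^`() * b + u * b^`()))
     - (b^`() * v + b * v^`()) * (a * v - u * b) by ring.
by rewrite H1 H2 !mulr0 subrr.
Qed.

Lemma dzP (u : {poly k}) : dz (u%:F) = (u^`())%:F.
Proof.
have := @dzE u 1 (oner_neq0 _); rewrite tofrac1 divr1 derivC expr1n tofrac1 divr1.
by rewrite mulr1 mulr0 subr0.
Qed.

Lemma dzM (f g : K) : dz (f * g) = dz f * g + f * dz g.
Proof.
have [a [b [hb ->]]] := fracP f; have [c [d [hd ->]]] := fracP g.
have -> : a%:F / b%:F * (c%:F / d%:F) = (a * c)%:F / (b * d)%:F :> K.
  by rewrite !tofracM invfM mulrACA.
rewrite !dzE ?mulf_neq0 //.
rewrite !derivM !(tofracM, tofracB, tofracD, tofracXn).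
exact: fM (tofrac_neq0 hb) (tofrac_neq0 hd).
Qed.

Lemma dzB (f g : K) : dz (f - g) = dz f - dz g.
Proof.
have [a [b [hb ->]]] := fracP f; have [c [d [hd ->]]] := fracP g.
have -> : a%:F / b%:F - (c%:F / d%:F) = (a * d - c * b)%:F / (b * d)%:F :> K.
  have hb' := tofrac_neq0 hb; have hd' := tofrac_neq0 hd.
  rewrite !(tofracM, tofracB); exact: fB0 (tofrac_neq0 hb) (tofrac_neq0 hd).
rewrite !dzE ?mulf_neq0 //.
rewrite !(derivM, derivB) !(tofracM, tofracB, tofracD, tofracXn).
exact: fB (tofrac_neq0 hb) (tofrac_neq0 hd).
Qed.

Lemma dz_const (u v : {poly k}) : u^`() = 0 -> v^`() = 0 -> dz (u%:F / v%:F) = 0.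
Proof.
move=> hu hv; have [->|v0] := eqVneq v 0.
  by rewrite tofrac0 invr0 mulr0 -tofrac0 dzP deriv0 tofrac0.
by rewrite dzE // hu hv !mul0r mulr0 subr0 tofrac0 mul0r.
Qed.

Lemma iter_dzM (c f : K) i : dz c = 0 -> iter i (@dz k) (c * f) = c * iter i (@dz k) f.
Proof. by move=> hc; elim: i => //= i ->; rewrite dzM hc mul0r add0r. Qed.

Lemma iter_dzB (f g : K) i : iter i (@dz k) (f - g) = iter i (@dz k) f - iter i (@dz k) g.
Proof. by elim: i => //= i ->; rewrite dzB. Qed.

Lemma iter_dzP (u : {poly k}) i : iter i (@dz k) (u%:F) = (u^`(i))%:F.
Proof. by elim: i => //= i ->; rewrite dzP. Qed.

Lemma applyOpM (L : {poly K}) c f : dz c = 0 -> applyOp L (c * f) = c * applyOp L f.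
Proof.
move=> hc; rewrite /applyOp mulr_sumr; apply: eq_bigr => i _.
by rewrite iter_dzM // mulrCA.
Qed.

Lemma applyOpB (L : {poly K}) f g : applyOp L (f - g) = applyOp L f - applyOp L g.
Proof.
rewrite /applyOp -sumrB; apply: eq_bigr => i _.
by rewrite iter_dzB mulrBr.
Qed.

End Frac.

Section Polys.
Variable k : fieldType.

Lemma decX (v : {poly k}) : v != 0 -> exists b w, v = 'X^b * w /\ w.[0] != 0.
Proof.
elim: {v}(size v) {-2}v (leqnn (size v)) => [|n IH] v hs hv.
  by move: hv; rewrite -size_poly_eq0; move: hs; rewrite leqn0 => ->.
have [h0|h0] := eqVneq v.[0] 0; last by exists 0%N, v; rewrite expr0 mul1r.
have /factor_theorem [q hq] : root v 0 by apply/rootP.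
have q0 : q != 0 by apply: contraNneq hv => q0; rewrite hq q0 mul0r.
have hsq : (size q <= n)%N.
  move: hs; rewrite hq size_mul ?polyXsubC_eq0 // size_XsubC addn2 /=.
  by [].
have [b [w [hw1 hw2]]] := IH q hsq q0.
exists b.+1, w; split => //.
by rewrite hq hw1 subr0 -mulrA (mulrC w) mulrA -exprSr.
Qed.

Variable p : nat.
Hypothesis hk : p \in [pchar k].

Lemma pprime : prime p. Proof. exact: pcharf_prime hk. Qed.

Lemma deriv0_supp (P : {poly k}) : P^`() = 0 -> forall i, ~~ (p %| i)%N -> P`_i = 0.
Proof.
move=> hP [|i] hi; first by rewrite dvdn0 in hi.
have := congr1 (fun q : {poly k} => q`_i) hP; rewrite coef_deriv coef0 -mulr_natr => /eqP.
rewrite mulf_eq0 => /orP [/eqP //|]; by rewrite -(dvdn_pcharf hk) (negbTE hi).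
Qed.

Lemma supp_comp (P : {poly k}) : (forall i, ~~ (p %| i)%N -> P`_i = 0) ->
  P = (\poly_(i < size P) P`_(i * p)) \Po 'X^p.
Proof.
move=> hP; have p0 : (0 < p)%N by exact: prime_gt0 pprime.
apply/polyP => i; rewrite coef_comp_poly_Xn //.
case: ifP => hd; last by rewrite hP // hd.
rewrite coef_poly divnK //; case: ifP => // hlt.
apply: nth_default; rewrite leqNgt; apply/negP => hi; move: hlt.
by rewrite (leq_ltn_trans (leq_div _ _) hi).
Qed.

Lemma deriv_pow_p (v : {poly k}) : (v ^+ p)^`() = 0.
Proof. by rewrite deriv_exp mulrn_pchar // pchar_poly. Qed.

Lemma deriv_comp_Xp (Q : {poly k}) : (Q \Po 'X^p)^`() = 0.
Proof. by rewrite deriv_comp derivXn mulrn_pchar ?mulr0 // pchar_poly. Qed.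

End Polys.

Section Key.
Variable k : fieldType.
Lemma derivn_XmW (m s : nat) (w : {poly k}) :
  'X^s * ('X^m * w)^`(s) = 'X^m * \poly_(i < size w) (w`_i *+ (i + m) ^_ s).
Proof.
apply/polyP => j; rewrite !coefXnM coef_derivn coef_poly.
case: (ltnP j m) => hjm.
  case: (ltnP j s) => // hjs; rewrite subnKC // coefXnM hjm mul0rn //.
case: (ltnP j s) => hjs.
  rewrite ffact_small ?mulr0n ?subnK //; case: ifP => //.
rewrite subnKC // coefXnM ltnNge hjm /= subnK //.
case: ifP => // hsz; rewrite nth_default ?mul0rn //; by rewrite leqNgt hsz.
Qed.
End Key.

Lemma fD0 (F: fieldType) (A B C D : F): B != 0 -> D != 0 -> A/B + C/D = (A*D + C*B)/(B*D).
Proof. by move=> hB hD; field; rewrite hB hD. Qed.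
Lemma fM0 (F: fieldType) (A B C D : F): A/B * (C/D) = (A*C)/(B*D).
Proof. by rewrite invfM mulrACA. Qed.

Section Val.
Variable k : fieldType.
Local Notation K := {fraction {poly k}}.

Lemma valP (q : {poly k}) : valueAt0 (q%:F : K) q.[0].
Proof. by exists q, 1; rewrite hornerC oner_neq0 tofrac1 !divr1. Qed.

Lemma val0 (c : k) : valueAt0 (0 : K) c -> c = 0.
Proof.
move=> [u [v [hv [h ->]]]].
have v0 : v != 0 by apply: contraNneq hv => ->; rewrite horner0.
move/eqP: h; rewrite eq_sym mulf_eq0 invr_eq0 !tofrac_eq0 (negbTE v0) orbF => /eqP ->.
by rewrite horner0 mul0r.
Qed.

Lemma valD (f g : K) a b : valueAt0 f a -> valueAt0 g b -> valueAt0 (f + g) (a + b).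
Proof.
move=> [u [v [hv [-> ->]]]] [u' [v' [hv' [-> ->]]]].
have v0 : v != 0 by apply: contraNneq hv => ->; rewrite horner0.
have v0' : v' != 0 by apply: contraNneq hv' => ->; rewrite horner0.
exists (u * v' + u' * v), (v * v'); rewrite hornerM mulf_neq0 //; split => //.
rewrite fD0 ?tofrac_eq0 // !(tofracM, tofracD); split => //.
by rewrite fD0 // !(hornerM, hornerD).
Qed.

Lemma valM (f g : K) a b : valueAt0 f a -> valueAt0 g b -> valueAt0 (f * g) (a * b).
Proof.
move=> [u [v [hv [-> ->]]]] [u' [v' [hv' [-> ->]]]].
exists (u * u'), (v * v'); rewrite hornerM mulf_neq0 //; split => //.
by rewrite fM0 !tofracM fM0 !hornerM.
Qed.

Lemma valsum (I : finType) (F : I -> K) (c : I -> k) :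
  (forall i, valueAt0 (F i) (c i)) -> valueAt0 (\sum_i F i) (\sum_i c i).
Proof.
move=> h; elim: (index_enum I) => [|i r IH]; rewrite ?big_nil ?big_cons.
  by have := valP 0; rewrite tofrac0 horner0.
by apply: valD.
Qed.

End Val.

Lemma fchoice (T : Type) (P : nat -> T -> Prop) N :
  (forall i, (i <= N)%N -> exists c, P i c) ->
  exists e : nat -> T, forall i, (i <= N)%N -> P i (e i).
Proof.
elim: N => [|N IH] h.
  have [c hc] := h 0%N (leqnn 0); exists (fun _ => c) => i; rewrite leqn0 => /eqP -> //.
have [e he] := IH (fun i hi => h i (leqW hi)).
have [c hc] := h N.+1 (leqnn _).
exists (fun i => if i == N.+1 then c else e i) => i hi.
case: eqVneq => [->//|hne]; apply: he; by rewrite -ltnS ltn_neqAle hne.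
Qed.

Section FK.
Variable k : fieldType.
Definition fk (s : nat) : {poly k} := \prod_(j < s) ('X - (j%:R)%:P).

Lemma fkS s : fk s.+1 = fk s * ('X - (s%:R)%:P).
Proof. by rewrite /fk big_ord_recr. Qed.

Lemma size_fk s : size (fk s) = s.+1.
Proof.
elim: s => [|s IH]; first by rewrite /fk big_ord0 size_poly1.
rewrite fkS size_mul ?polyXsubC_eq0 // ?size_XsubC ?IH ?addn2 //.
by rewrite -size_poly_eq0 IH.
Qed.

Lemma horner_fk s m : (fk s).[m%:R] = (m ^_ s)%:R.
Proof.
elim: s => [|s IH]; first by rewrite /fk big_ord0 hornerC ffactn0.
rewrite fkS hornerM IH hornerXsubC ffactnSr natrM.
have [hsm|hsm] := leqP s m; first by rewrite natrB.
by rewrite (ffact_small hsm) !(mul0r, mulr0n).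
Qed.

Lemma fallF_fk s : fallF k s = map_poly ((@FracField.tofrac _) \o polyC) (fk s).
Proof.
rewrite /fallF /fk rmorph_prod; apply: eq_bigr => j _.
Time rewrite rmorphB /= map_polyX map_polyC /=. have hj : ((j%:R : k)%:P)%:F = j%:R by rewrite polyC_natr rmorph_nat. Time by rewrite hj.
Qed.
End FK.

Lemma fC (F : fieldType) (A B U W : F) : B != 0 -> W != 0 -> A * B * (U / (B * W)) = A * U / W.
Proof. by move=> hB hW; field; rewrite hB hW. Qed.

Lemma g1 (R : comRingType) (Z XS li Ls QS : R) :
  Z * XS * li * (Ls * QS) = Z * (Ls * li) * (XS * QS).
Proof. by ring. Qed.

Section Core.
Variable k : fieldType.
Local Notation K := {fraction {poly k}}.
Variables (C : closedFieldType) (phi : {rmorphism k -> C}).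
Variable L : {poly K}.
Hypothesis hL : L != 0.
Hypothesis hR : forall i, (1 <= i <= ordOp L)%N -> ordBound phi 0 i (monCoef L i).
Local Notation n := (ordOp L).

Lemma sizeL : size L = n.+1.
Proof. by rewrite /ordOp prednK // size_poly_gt0. Qed.

Lemma zKXn i : zK k ^+ i = ('X^i)%:F.
Proof. by rewrite /zK tofracXn. Qed.

Lemma E1 i : (i <= n)%N -> exists c, valueAt0 (zK k ^+ i * monCoef L i) c.
Proof.
case: i => [|i] hi.
  exists 1; rewrite expr0 mul1r /monCoef subn0 lead_coefE divff; last first.
    by rewrite -lead_coefE lead_coef_eq0.
  by have := valP (1 : {poly k}); rewrite tofrac1 hornerC.
have [u [v [hv [ha hdiv]]]] := @hR i.+1 hi.
have [b [w [hvw hw]]] := decX hv.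
have w0 : w != 0 by apply: contraNneq hw => ->; rewrite horner0.
have hb : (b <= i.+1)%N.
  rewrite leqNgt; apply/negP => hlt; move: hdiv; rewrite hvw rmorphM /= map_polyXn.
  rewrite polyC0 subr0; apply/negP/negPn.
  by apply: dvdp_mulr; apply: dvdp_exp2l.
exists (('X^(i.+1 - b) * u).[0] / w.[0]), ('X^(i.+1 - b) * u), w; split => //; split => //.
rewrite ha zKXn hvw -(subnK hb) exprD tofracM !tofracM fC; [by rewrite subnK | by rewrite tofrac_eq0 monic_neq0 ?monicXn | by rewrite tofrac_eq0].
Qed.


Lemma sum_rev (R : nmodType) (F : nat -> R) N :
  \sum_(i < N.+1) F (N - i)%N = \sum_(i < N.+1) F i.
Proof.
rewrite (reindex_inj rev_ord_inj); apply: eq_bigr => i _.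
by rewrite /= subSS subKn // -ltnS.
Qed.

Variable p : nat.
Hypothesis hk : p \in [pchar k].
Hypothesis hE : exponents0_zero L.

Lemma core m w : w.[0] != 0 -> applyOp L (('X^m * w)%:F) = 0 -> (p %| m)%N.
Proof.
move=> hw hker.
have [e he] := @fchoice k (fun i c => valueAt0 (zK k ^+ i * monCoef L i) c) n (fun i hi => E1 hi).
set q := 'X^m * w in hker.
pose r s := \poly_(i < size w) (w`_i *+ (i + m) ^_ s).
have w0 : w != 0 by apply: contraNneq hw => ->; rewrite horner0.
have hr0 s : (r s).[0] = w.[0] *+ m ^_ s.
  by rewrite !horner_coef0 coef_poly size_poly_gt0 w0 /= add0n.
have hA : applyOp L q%:F = \sum_(s < n.+1) L`_s * (q^`(s))%:F.
  rewrite /applyOp sizeL; apply: eq_bigr => s _; by rewrite iter_dzP.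
have hlead : lead_coef L != 0 by rewrite lead_coef_eq0.
have hS : \sum_(s < n.+1) (zK k ^+ (n - s) * monCoef L (n - s)) * (r s)%:F = 0.
  have : zK k ^+ n / lead_coef L * applyOp L q%:F =
      zK k ^+ m * \sum_(s < n.+1) (zK k ^+ (n - s) * monCoef L (n - s)) * (r s)%:F.
    rewrite hA !mulr_sumr; apply: eq_bigr => s _.
    have hs : (s <= n)%N by rewrite -ltnS.
    rewrite /monCoef subKn //.
    have hq : ('X^s)%:F * (q^`(s))%:F = ('X^m)%:F * (r s)%:F :> K.
      by rewrite -!tofracM derivn_XmW.
    have -> : zK k ^+ n = zK k ^+ (n - s) * ('X^s)%:F by rewrite -zKXn -exprD subnK.
    transitivity (zK k ^+ (n - s) * (L`_s / lead_coef L) * (('X^s)%:F * (q^`(s))%:F)).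
      exact: g1.
    by rewrite hq -zKXn mulrCA.
  rewrite hker mulr0 => /esym /eqP; rewrite mulf_eq0 expf_eq0 /zK tofrac_eq0 polyX_eq0 andbF /=.
  by move/eqP.
have hv : valueAt0 (\sum_(s < n.+1) (zK k ^+ (n - s) * monCoef L (n - s)) * (r s)%:F)
     (\sum_(s < n.+1) e (n - s)%N * (w.[0] *+ m ^_ s)).
  apply: valsum => s; apply: valM; first by apply: he; exact: leq_subr.
  rewrite -hr0; exact: valP.
rewrite hS in hv; have hS2 := val0 hv.
have hS3 : \sum_(i < n.+1) e i * (m ^_ (n - i))%:R = 0.
  have : w.[0] * \sum_(s < n.+1) e (n - s)%N * (m ^_ s)%:R = 0.
    rewrite mulr_sumr -[RHS]hS2; apply: eq_bigr => s _.
    by rewrite mulrCA mulr_natr.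
  move/eqP; rewrite mulf_eq0 (negbTE hw) /= => /eqP h; rewrite -[RHS]h.
  rewrite -(sum_rev (fun s => e (n - s)%N * (m ^_ s)%:R)); apply: eq_bigr => i _.
  by rewrite /= subKn ?leq_ord.
pose c j := \sum_(i < n.+1) e i * (fk k (n - i))`_(n - j).
have hc : forall j, (j <= n)%N -> valueAt0 (bCoef L j) (c j).
  move=> j hj; rewrite /bCoef /deltaForm coef_sum /c; apply: valsum => i.
  rewrite coefZ fallF_fk coef_map /=; apply: valM; first by apply: he; rewrite -ltnS.
  by have := valP ((fk k (n - i))`_(n - j))%:P; rewrite hornerC.
have hx := hE hc (phi := phi) (x := m%:R).
have : (m%:R : C) = 0.
  apply: hx; rewrite /root -(rmorph_nat phi) horner_map /=.
  suff -> : (\sum_(j < n.+1) c j *: 'X^(n - j)).[m%:R] = 0 by rewrite rmorph0.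
  rewrite -hS3 horner_sum /c.
  under eq_bigr do rewrite hornerZ hornerXn mulr_suml.
  rewrite exchange_big /=; apply: eq_bigr => i _.
  rewrite -horner_fk (@horner_coef_wide _ n.+1); last by rewrite size_fk ltnS leq_subr.
  rewrite -(sum_rev (fun t => (fk k (n - i))`_t * (m%:R) ^+ t)) mulr_sumr.
  by apply: eq_bigr => j _; rewrite mulrA.
by move/eqP; rewrite -(dvdn_pcharf (rmorph_pchar phi hk)).
Qed.

End Core.

Lemma h1 (F : fieldType) (U B V : F) : V != 0 -> U * B = (B * V) * (U / V).
Proof. by move=> hV; field. Qed.
Lemma h2 (F : fieldType) (A B E : F) : B != 0 -> E != 0 -> A / B = (A * E) / (E * B).
Proof. by move=> hB hE; field; rewrite hB hE. Qed.
Lemma h3 (F : fieldType) (Bp W v N U : F) : Bp != 0 -> v != 0 ->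
  Bp * (W * v) * (N / Bp * (U / v)) = N * (U * W).
Proof. by move=> hB hv; field; rewrite hB hv. Qed.

Unset Implicit Arguments.
Set Strict Implicit.
Theorem mainTheorem10 (p : nat) (k : finFieldType)
  (hp : prime p) (hk : p \in [pchar k])
  (L : {poly {fraction {poly k}}}) (hL : L != 0) (hmom : MOM0 L)
  (hker : exists f, f != 0 /\ applyOp L f = 0) :
  exists f0, f0 != 0 /\ applyOp L f0 = 0 /\
    forall f, applyOp L f = 0 <-> exists c, inKzp p c /\ f = c * f0.
Proof.
have [C [phi _]] := countable_algebraic_closure k.
case: hmom => _ [hR0 hE].
have hR : forall i, (1 <= i <= ordOp L)%N -> ordBound phi 0 i (monCoef L i).
  by move=> i hi; exact: hR0.
have hcore := core hL hR hk hE.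
have hp0 : (0 < p)%N by exact: prime_gt0.
have hdzp : forall v : {poly k}, dz ((v ^+ p)%:F) = 0.
  by move=> v; rewrite dzP deriv_pow_p // tofrac0.
have [f0 [hf0 hkf0]] := hker.
exists f0; split => //; split => //.
move=> f; split; last first.
  move=> [c [[U [W hc]] ->]].
  have hdc : dz c = 0 by rewrite hc; apply: dz_const; exact: deriv_comp_Xp.
  by rewrite applyOpM // hkf0 mulr0.
move=> hf.
have [u0 [v0 [hv0 hf0e]]] := fracP f0.
have hu0 : u0 != 0.
  by apply: contraNneq hf0 => hu; rewrite hf0e hu tofrac0 mul0r.
set Q0 := u0 * v0 ^+ p.-1.
have hQ0 : Q0 != 0 by rewrite mulf_neq0 // expf_neq0.
have hQ0e : Q0%:F = (v0 ^+ p)%:F * f0.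
  rewrite hf0e -[in RHS](prednK hp0) exprSr /Q0 !tofracM.
  by apply: h1; rewrite tofrac_eq0.
have [m0 [w0 [hQ0d hw0]]] := decX hQ0.
have hpm0 : (p %| m0)%N.
  by apply: (hcore _ w0 hw0); rewrite -hQ0d hQ0e applyOpM // hkf0 mulr0.
have [a [b [hb hg]]] := fracP (f / f0).
set N := a * b ^+ p.-1; set V := b ^+ p.
have hV : V != 0 by rewrite expf_neq0.
have hgNV : f / f0 = N%:F / V%:F.
  rewrite hg /N /V -[in RHS](prednK hp0) exprSr !tofracM.
  by apply: h2; rewrite tofrac_eq0 // expf_neq0.
set N0 := \poly_(i < size N) (if (p %| i)%N then N`_i else 0).
have hN0s : forall i, ~~ (p %| i)%N -> N0`_i = 0.
  by move=> i hi; rewrite coef_poly (negbTE hi); case: ifP.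
have hVs : forall i, ~~ (p %| i)%N -> V`_i = 0.
  exact: (deriv0_supp hk (deriv_pow_p hk b)).
set c := N0%:F / V%:F.
have hc : inKzp p c.
  by exists (\poly_(i < size N0) N0`_(i * p)), (\poly_(i < size V) V`_(i * p));
     rewrite -!supp_comp.
have hdc : dz c = 0.
  by rewrite /c (supp_comp hk hN0s) (supp_comp hk hVs); apply: dz_const; exact: deriv_comp_Xp.
set N1 := N - N0.
have [hN1|hN1] := eqVneq N1 0.
  exists c; split => //.
  rewrite -[f](divfK hf0) hgNV /c; congr (_ * _); congr (_ / _); congr (_%:F).
  by apply/eqP; rewrite -subr_eq0 -/N1 hN1.
exfalso.
have hh : applyOp L (f - c * f0) = 0 by rewrite applyOpB applyOpM // hf hkf0 mulr0 subrr.
have hhe : ((b * v0) ^+ p)%:F * (f - c * f0) = (N1 * Q0)%:F.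
  have -> : f - c * f0 = (N1%:F / V%:F) * f0.
    rewrite -{1}[f](divfK hf0) hgNV /c /N1 tofracB -mulrBl; congr (_ * _).
    by rewrite mulrBl.
  rewrite hf0e /V exprMn -[X in v0 ^+ X](prednK hp0) exprSr /Q0 !tofracM.
  by apply: h3; rewrite tofrac_eq0 // expf_neq0.
have [a1 [n1 [hN1d hn1]]] := decX hN1.
have hpa : (p %| a1 + m0)%N.
  apply: (hcore _ (n1 * w0)); first by rewrite hornerM mulf_neq0.
  have -> : 'X^(a1 + m0) * (n1 * w0) = ('X^a1 * n1) * ('X^m0 * w0).
    by rewrite exprD -!mulrA; congr (_ * _); rewrite mulrCA.
  by rewrite -hN1d -hQ0d -hhe applyOpM // hh mulr0.
rewrite (dvdn_addl _ hpm0) in hpa.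
have : N1`_a1 = 0.
  rewrite /N1 coefB coef_poly hpa; case: ifP => hs; first by rewrite subrr.
  by rewrite subr0 nth_default // leqNgt hs.
rewrite hN1d coefXnM ltnn subnn -horner_coef0 => /eqP.
by rewrite (negbTE hn1).
Qed.
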